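(* In the setting of the context, for every $N\in\mathcal N$: (1) $N^e=\{u\in D: f(d^\ast ud)\in N \text{ for every } d\in D\}$; (2) $N^{ec}=\bigcap_{\sigma\in G}N_\sigma$; (3) $(N_\sigma)^e=N^e$ for every $\sigma\in G$; (4) $N^{ece}=N^e$. For every $M\in\mathcal M$: (5) $(M^c)_\sigma=M^c$ for every $\sigma\in G$; (6) $M^{cec}=M^c$.
   Context: Let $K/F$ be a finite Galois extension of fields of characteristic $0$ with Galois group $G$, $n=|G|$; write $k^\sigma$ for the image of $k$ under $\sigma$. Let $\Phi$ be a normalized $2$-cocycle and $D=(K/F,\Phi)$ the crossed product: right $K$-vector space with basis $(e_\sigma)_{\sigma\in G}$, $e_{\mathrm{id}}=1$, multiplication $(\sum e_\sigma c_\sigma)(\sum e_\tau d_\tau)=\sum e_{\sigma\tau}\Phi(\sigma,\tau)c_\sigma^\tau d_\tau$. Assume $D$ is a division algebra and $\ast$ an involution on $D$ with $K^\ast\subseteq K$. A unital hermitian cone on a ring $R$ with involution $\ast$ is a subset $M\subseteq\{r:r^\ast=r\}$ with $1\in M$, $M+M\subseteq M$, $aMa^\ast\subseteq M$ for all $a\in R$, $M\cap-M=\{0\}$. Assume $a_\sigma:=e_\sigma^\ast e_\sigma\in K$ for all $\sigma$, and let $\mathcal N$ be the set of unital hermitian cones on $(K,\ast)$ containing all $a_\sigma$; assume $\mathcal N\neq\emptyset$. For $N\in\mathcal N$, $N_\sigma=\{k\in K: a_\sigma k^\sigma\in N\}$. Let $\mathcal M$ be the set of unital hermitian cones on $(D,\ast)$.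 Define $f\colon D\to K$ by $f(\sum e_\sigma c_\sigma)=c_{\mathrm{id}}$, and $\lambda\colon D\to M_n(K)$ by $ae_\tau=\sum_\sigma e_\sigma\lambda(a)_{\sigma\tau}$. Let $A=\mathrm{diag}(a_\sigma)_{\sigma\in G}$. For $M\in\mathcal M$ put $M^c=M\cap K$, and for $N\in\mathcal N$ put $N^e=\{c\in D: x^\ast A\lambda(c)x\in N\text{ for every column vector } x\in K^n\}$, where $x^\ast$ is the row vector of the $\ast$-images of the entries of $x$. (Then $M^c\in\mathcal N$ and $N^e\in\mathcal M$.) Compositions are written as superscripts, e.g. $N^{ec}=(N^e)^c$. *)

(* Defs.v *)
From HB Require Import structures.
From mathcomp Require Import all_boot all_order all_algebra all_fingroup.
Set Implicit Arguments. Unset Strict Implicit. Unset Printing Implicit Defensive.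
Import GRing.Theory.
Local Open Scope ring_scope.

(* The Galois group is the whole finite group gT; its right action on K is
   [act]: k^s = act s k, with (k^s)^t = k^(s*t).
   An element sum_s e_s c_s of the crossed product D = (K/F, Phi) is
   represented by its coefficient function c : {ffun gT -> K}. *)

Section CrossedProduct.
Variables (gT : finGroupType) (K : fieldType).
Variable act : gT -> {rmorphism K -> K}.
Variable Phi : gT -> gT -> K.

Definition cp_e (s : gT) : {ffun gT -> K} := [ffun t => (t == s)%:R].
Definition cp_one : {ffun gT -> K} := cp_e 1%g.
Definition cp_emb (k : K) : {ffun gT -> K} :=
  [ffun t => if t == 1%g then k else 0].
(* (sum e_s c_s)(sum e_t d_t) = sum e_(st) Phi(s,t) c_s^t d_t *)
Definition cp_mul (x y : {ffun gT -> K}) : {ffun gT -> K} :=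
  [ffun r => \sum_(s : gT) \sum_(t : gT | (s * t)%g == r)
                Phi s t * act t (x s) * y t].
Definition cp_f (x : {ffun gT -> K}) : K := x 1%g.
(* a e_t = sum_s e_s lambda(a)_(s,t) *)
Definition cp_lambda (c : {ffun gT -> K}) (s t : gT) : K := cp_mul c (cp_e t) s.

Variable starK : K -> K.
Variable starD : {ffun gT -> K} -> {ffun gT -> K}.

Definition cp_a (s : gT) : K := cp_f (cp_mul (starD (cp_e s)) (cp_e s)).

Definition cone_ext (N : K -> Prop) : {ffun gT -> K} -> Prop :=
  fun c => forall x : gT -> K,
    N (\sum_(s : gT) \sum_(t : gT) starK (x s) * cp_a s * cp_lambda c s t * x t).

Definition cone_twist (N : K -> Prop) (s : gT) : K -> Prop :=
  fun k => N (cp_a s * act s k).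

Definition cone_contr (M : {ffun gT -> K} -> Prop) : K -> Prop :=
  fun k => M (cp_emb k).
End CrossedProduct.

Definition is_involution (T : zmodType) (mul : T -> T -> T) (star : T -> T) :=
  [/\ forall x y, star (x + y) = star x + star y,
      forall x y, star (mul x y) = mul (star y) (star x)
    & forall x, star (star x) = x].

Definition herm_cone (T : zmodType) (mul : T -> T -> T) (one : T)
    (star : T -> T) (M : T -> Prop) : Prop :=
  [/\ forall x, M x -> star x = x,
      M one,
      forall x y, M x -> M y -> M (x + y),
      forall a x, M x -> M (mul (mul a x) (star a))
    & forall x, (M x /\ M (- x)) <-> x = 0].

(* Main.v *)
Require Import Defs.
From HB Require Import structures.
From mathcomp Require Import all_boot all_order all_algebra all_fingroup.
Set Implicit Arguments. Unset Strict Implicit. Unset Printing Implicit Defensive.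
Import GRing.Theory.
Local Open Scope ring_scope.

Section CP.
Variables (gT : finGroupType) (K : fieldType).
Variable act : gT -> {rmorphism K -> K}.
Variable Phi : gT -> gT -> K.
Local Notation D := {ffun gT -> K}.
Local Notation mul := (cp_mul act Phi).

Definition mono (s : gT) (k : K) : D := [ffun t => if t == s then k else 0].

Lemma sum2_r (F : gT -> gT -> K) r t :
  (forall u v, v != t -> F u v = 0) ->
  \sum_u \sum_(v | (u * v)%g == r) F u v = F (r * t^-1)%g t.
Proof.
move=> H; rewrite (bigD1 (r * t^-1)%g) //=. rewrite [X in _ + X = _]big1.
  rewrite (bigD1 t) ?mulgKV //= big1 ?addr0 // => v /andP[Hv Hvt].
  by rewrite H.
move=> u Hu; rewrite big1 // => v Hv; case: (eqVneq v t) => [Evt|]; last exact: H.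
by move: Hv Hu; rewrite Evt => /eqP <-; rewrite mulgK eqxx.
Qed.

Lemma sum2_l (F : gT -> gT -> K) r s :
  (forall u v, u != s -> F u v = 0) ->
  \sum_u \sum_(v | (u * v)%g == r) F u v = F s (s^-1 * r)%g.
Proof.
move=> H; rewrite (bigD1 s) //= [X in _ + X]big1 ?addr0 => [|u Hu]; last first.
  by rewrite big1 // => v _; rewrite H.
rewrite (bigD1 (s^-1 * r)%g) ?mulKVg //= big1 ?addr0 // => v /andP[Hv Hvt].
by move: Hvt; rewrite -(eqP Hv) mulKg eqxx.
Qed.

Lemma mul_mono_r x t d r :
  mul x (mono t d) r = Phi (r * t^-1)%g t * act t (x (r * t^-1)%g) * d.
Proof.
rewrite /cp_mul ffunE (sum2_r _ _ (t:=t)) ?ffunE ?eqxx // => u v.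
by rewrite ffunE => /negbTE ->; rewrite mulr0.
Qed.

Lemma mul_mono_l s c y r :
  mul (mono s c) y r = Phi s (s^-1 * r)%g * act (s^-1 * r)%g c * y (s^-1 * r)%g.
Proof.
rewrite /cp_mul ffunE (sum2_l _ _ (s:=s)) ?ffunE ?eqxx // => u v.
by rewrite ffunE => /negbTE ->; rewrite rmorph0 mulr0 mul0r.
Qed.

Lemma mulDl x x' y : mul (x + x') y = mul x y + mul x' y.
Proof.
apply/ffunP=> r; rewrite !ffunE -big_split /=; apply: eq_bigr => s _.
rewrite -big_split /=; apply: eq_bigr => t _.
by rewrite ffunE rmorphD /= mulrDr mulrDl.
Qed.

Lemma mulDr x y y' : mul x (y + y') = mul x y + mul x y'.
Proof.
apply/ffunP=> r; rewrite !ffunE -big_split /=; apply: eq_bigr => s _.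
rewrite -big_split /=; apply: eq_bigr => t _.
by rewrite ffunE mulrDr.
Qed.

Lemma cmul0l y : mul 0 y = 0.
Proof.
apply/ffunP=> r; rewrite !ffunE big1 // => s _; rewrite big1 // => t _.
by rewrite ffunE rmorph0 mulr0 mul0r.
Qed.

Lemma cmul0r y : mul y 0 = 0.
Proof.
apply/ffunP=> r; rewrite !ffunE big1 // => s _; rewrite big1 // => t _.
by rewrite ffunE mulr0.
Qed.

Lemma mul_sumL (I : Type) (rr : seq I) (P : pred I) (F : I -> D) y :
  mul (\sum_(i <- rr | P i) F i) y = \sum_(i <- rr | P i) mul (F i) y.
Proof. exact: (big_morph (mul^~ y) (fun a b => mulDl a b y) (cmul0l y)). Qed.

Lemma mul_sumR (I : Type) (rr : seq I) (P : pred I) (F : I -> D) y :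
  mul y (\sum_(i <- rr | P i) F i) = \sum_(i <- rr | P i) mul y (F i).
Proof. exact: (big_morph (mul y) (mulDr y) (cmul0r y)). Qed.

Lemma decomp (x : D) : x = \sum_s mono s (x s) :> D.
Proof.
apply/ffunP => r; rewrite sum_ffunE (bigD1 r) //= big1 ?addr0 ?ffunE ?eqxx //.
by move=> s Hs; rewrite ffunE eq_sym (negbTE Hs).
Qed.

Lemma mono_mul s c t d :
  mul (mono s c) (mono t d) = mono (s * t)%g (Phi s t * act t c * d).
Proof.
apply/ffunP=> r; rewrite mul_mono_l !ffunE.
case: (eqVneq r (s * t)%g) => [->|Hr]; first by rewrite mulKg !eqxx.
case: eqP => [Hst|]; last by rewrite mulr0.
by case/eqP: Hr; rewrite -Hst mulKVg.
Qed.

Hypothesis act1 : forall k, act 1%g k = k.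
Hypothesis actM : forall (s t : gT) k, act (s * t)%g k = act t (act s k).
Hypothesis Phi_norm : forall s, Phi 1%g s = 1 /\ Phi s 1%g = 1.
Hypothesis Phi_cocycle : forall s t r,
  Phi (s * t)%g r * act r (Phi s t) = Phi s (t * r)%g * Phi t r.

Lemma mono_assoc s c t d r g :
  mul (mul (mono s c) (mono t d)) (mono r g) =
  mul (mono s c) (mul (mono t d) (mono r g)).
Proof.
rewrite !mono_mul mulgA; congr mono.
rewrite !rmorphM /= actM.
rewrite !mulrA Phi_cocycle; congr (_ * _).
rewrite -!mulrA; congr (_ * _); rewrite mulrCA; congr (_ * _).
Qed.

Lemma mulA1 s c t d z :
  mul (mul (mono s c) (mono t d)) z = mul (mono s c) (mul (mono t d) z).
Proof.
rewrite (decomp z) !mul_sumR; apply: eq_bigr => r _; exact: mono_assoc.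
Qed.

Lemma mulA2 s c y z :
  mul (mul (mono s c) y) z = mul (mono s c) (mul y z).
Proof.
rewrite (decomp y) mul_sumR mul_sumL mul_sumL mul_sumR.
apply: eq_bigr => t _; exact: mulA1.
Qed.

Lemma mulA x y z : mul (mul x y) z = mul x (mul y z).
Proof.
rewrite (decomp x) !mul_sumL; apply: eq_bigr => s _; exact: mulA2.
Qed.

Lemma e_mono s : cp_e K s = mono s 1.
Proof. by apply/ffunP=> t; rewrite !ffunE; case: eqP. Qed.

Lemma emb_mono k : cp_emb gT k = mono 1 k.
Proof. by []. Qed.

Lemma one_mono : cp_one gT K = mono 1 1.
Proof. exact: e_mono. Qed.

Lemma mono_split s c : mono s c = mul (mono s 1) (mono 1 c).
Proof.
by rewrite mono_mul mulg1 (proj2 (Phi_norm s)) rmorph1 !mul1r.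
Qed.

Lemma cmul1l x : mul (mono 1 1) x = x.
Proof.
apply/ffunP=> r; rewrite mul_mono_l invg1 mul1g (proj1 (Phi_norm r)).
by rewrite rmorph1 !mul1r.
Qed.

Lemma cmul1r x : mul x (mono 1 1) = x.
Proof.
apply/ffunP=> r; rewrite mul_mono_r invg1 mulg1 (proj2 (Phi_norm r)).
by rewrite act1 mul1r mulr1.
Qed.

Lemma emb_mul a b : mul (mono 1 a) (mono 1 b) = mono 1 (a * b).
Proof. by rewrite mono_mul mulg1 (proj1 (Phi_norm 1%g)) act1 mul1r. Qed.

Lemma f_emb_l k y : cp_f (mul (mono 1 k) y) = k * cp_f y.
Proof.
by rewrite /cp_f mul_mono_l invg1 mulg1 (proj1 (Phi_norm 1%g)) act1 mul1r.
Qed.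

Lemma f_emb_r k y : cp_f (mul y (mono 1 k)) = cp_f y * k.
Proof.
by rewrite /cp_f mul_mono_r invg1 mulg1 (proj1 (Phi_norm 1%g)) act1 mul1r.
Qed.

Lemma f_sum (I : Type) (rr : seq I) (P : pred I) (F : I -> D) :
  cp_f (\sum_(i <- rr | P i) F i) = \sum_(i <- rr | P i) cp_f (F i).
Proof. by rewrite /cp_f sum_ffunE. Qed.

Lemma mul_e_r x t r :
  mul x (mono t 1) r = Phi (r * t^-1)%g t * act t (x (r * t^-1)%g).
Proof. by rewrite mul_mono_r mulr1. Qed.

Variable starK : K -> K.
Variable starD : D -> D.
Hypothesis starD_inv : is_involution mul starD.
Hypothesis starK_def : forall k, starD (cp_emb gT k) = cp_emb gT (starK k).
Hypothesis D_div : forall x : D, x != 0 ->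
  exists y, mul x y = cp_one gT K /\ mul y x = cp_one gT K.
Hypothesis a_in_K : forall s, exists k,
  mul (starD (cp_e K s)) (cp_e K s) = cp_emb gT k.
Hypothesis Phi_neq0 : forall s t, Phi s t != 0.

Lemma starDD x y : starD (x + y) = starD x + starD y.
Proof. by case: starD_inv. Qed.
Lemma starDM x y : starD (mul x y) = mul (starD y) (starD x).
Proof. by case: starD_inv. Qed.
Lemma starDK x : starD (starD x) = x.
Proof. by case: starD_inv. Qed.

Lemma starD0 : starD 0 = 0.
Proof.
have H := starDD 0 0; rewrite addr0 in H.
by apply: (addrI (starD 0)); rewrite addr0 -H.
Qed.

Lemma starD_sum (I : Type) (rr : seq I) (P : pred I) (F : I -> D) :
  starD (\sum_(i <- rr | P i) F i) = \sum_(i <- rr | P i) starD (F i).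
Proof. exact: (big_morph starD starDD starD0). Qed.

Lemma starD1 : starD (mono 1 1) = mono 1 1.
Proof.
rewrite -[starD _]cmul1l -{1}(starDK (mono 1 1)) -starDM cmul1l.
exact: starDK.
Qed.

Lemma mono1_inj a b : mono 1 a = mono 1 b -> a = b.
Proof. by move/ffunP/(_ 1%g); rewrite !ffunE eqxx. Qed.

Lemma starKK k : starK (starK k) = k.
Proof.
apply: mono1_inj; rewrite -!emb_mono -!starK_def; exact: starDK.
Qed.

Lemma starK0 : starK 0 = 0.
Proof.
have E : mono 1 0 = 0 :> D by apply/ffunP=> t; rewrite !ffunE; case: ifP.
apply: mono1_inj; rewrite -emb_mono -starK_def.
have E2 : cp_emb gT 0 = 0 :> D by exact: E.
by rewrite E2 starD0 E.
Qed.

Lemma starK1 : starK 1 = 1.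
Proof.
by apply: mono1_inj; rewrite -!emb_mono -starK_def emb_mono starD1.
Qed.

Lemma e_inv s : exists y, mul (mono s 1) y = mono 1 1 /\ mul y (mono s 1) = mono 1 1.
Proof.
rewrite -one_mono; apply: D_div; apply/eqP => /ffunP/(_ s).
by rewrite !ffunE eqxx; apply/eqP; exact: oner_neq0.
Qed.

Lemma starD_mono s c : starD (mono s c) = mul (mono 1 (starK c)) (starD (mono s 1)).
Proof. by rewrite mono_split starDM -emb_mono starK_def. Qed.

Lemma f_star_e_ne s r : r != s -> cp_f (mul (starD (mono s 1)) (mono r 1)) = 0.
Proof.
move=> Hrs; have [y [Hy1 Hy2]] := e_inv s.
have [k Hk] := a_in_K s; rewrite e_mono in Hk.
have -> : starD (mono s 1) = mul (mono 1 k) y.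
  by rewrite -emb_mono -Hk mulA Hy1 cmul1r.
rewrite mulA f_emb_l /cp_f mul_e_r mul1g.
have -> : y (r^-1)%g = 0; last by rewrite rmorph0 !mulr0.
have := congr1 (fun x : D => x (r^-1 * s)%g) Hy2; rewrite /= mul_e_r mulgK ffunE.
case: eqP => [H1|_].
  by case/eqP: Hrs; apply: (mulgI (r^-1)%g); rewrite H1 mulVg.
move/eqP; rewrite mulf_eq0 (negbTE (Phi_neq0 _ _)) /= fmorph_eq0.
by move/eqP.
Qed.

Lemma f_star_e s z : cp_f (mul (starD (cp_e K s)) z) = cp_a act Phi starD s * z s.
Proof.
rewrite {1}(decomp z) mul_sumR f_sum (bigD1 s) //= big1 ?addr0 => [|r Hr].
  rewrite mono_split -mulA f_emb_r /cp_a e_mono.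
  done.
by rewrite mono_split -mulA f_emb_r e_mono f_star_e_ne ?mul0r.
Qed.

Local Notation a_ := (cp_a act Phi starD).
Local Notation ext := (cone_ext act Phi starK starD).
Local Notation twist := (cone_twist act Phi starD).

Lemma mul_d_coord u (d : D) s :
  mul u d s = \sum_t cp_lambda act Phi u s t * d t.
Proof.
rewrite {1}(decomp d) mul_sumR sum_ffunE; apply: eq_bigr => t _.
rewrite mono_split -mulA mul_mono_r invg1 mulg1 (proj2 (Phi_norm _)) act1 mul1r.
by rewrite /cp_lambda e_mono.
Qed.

Lemma ext_formula (u d : D) :
  \sum_s \sum_t starK (d s) * a_ s * cp_lambda act Phi u s t * d t =
  cp_f (mul (mul (starD d) u) d).
Proof.
rewrite [X in starD X](decomp d) starD_sum !mul_sumL f_sum; apply: eq_bigr => s _.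
rewrite starD_mono !mulA f_emb_l -e_mono f_star_e mul_d_coord.
rewrite !mulr_sumr; apply: eq_bigr => t _; by rewrite !mulrA.
Qed.

Lemma char1 (N : K -> Prop) u :
  ext N u <-> (forall d, N (cp_f (mul (mul (starD d) u) d))).
Proof.
split=> H d.
  rewrite -ext_formula; exact: (H (fun s => d s)).
have := H (finfun d); rewrite -ext_formula.
suff -> : \sum_s \sum_t starK ([ffun x => d x] s) * a_ s * cp_lambda act Phi u s t *
   [ffun x => d x] t = \sum_s \sum_t starK (d s) * a_ s * cp_lambda act Phi u s t * d t by [].
apply: eq_bigr => s _; apply: eq_bigr => t _; by rewrite !ffunE.
Qed.

Lemma twist_key s y :
  cp_f (mul (mul (starD (cp_e K s)) y) (cp_e K s)) = a_ s * act s (cp_f y).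
Proof.
rewrite mulA f_star_e; congr (_ * _).
by rewrite e_mono mul_e_r mulgV (proj1 (Phi_norm _)) mul1r.
Qed.

Lemma char3 (N : K -> Prop) s u : ext (twist N s) u <-> ext N u.
Proof.
have E : forall d, a_ s * act s (cp_f (mul (mul (starD d) u) d)) =
   cp_f (mul (mul (starD (mul d (cp_e K s))) u) (mul d (cp_e K s))).
  by move=> d; rewrite -twist_key starDM !mulA.
have [y [Hy1 Hy2]] := e_inv s.
split=> /char1 H; apply/char1 => d.
  have := H (mul d y); by rewrite /cone_twist E e_mono (mulA d y) Hy2 cmul1r.
by rewrite /cone_twist E; exact: H.
Qed.

Lemma lam_emb k s t : cp_lambda act Phi (cp_emb gT k) s t = act s k * (s == t)%:R.
Proof.
by rewrite /cp_lambda emb_mono mul_mono_l invg1 !mul1g (proj1 (Phi_norm _)) mul1r ffunE.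
Qed.

Lemma diag_sum (k : K) (x : gT -> K) :
  \sum_s \sum_t starK (x s) * a_ s * cp_lambda act Phi (cp_emb gT k) s t * x t =
  \sum_s starK (x s) * (a_ s * act s k) * x s.
Proof.
apply: eq_bigr => s _; rewrite (bigD1 s) //= big1 ?addr0 => [|t Ht].
  by rewrite lam_emb eqxx mulr1 !mulrA.
by rewrite lam_emb eq_sym (negbTE Ht) mulr0 mulr0 mul0r.
Qed.

Lemma char2 (N : K -> Prop) k :
  N 0 -> (forall a b, N a -> N b -> N (a + b)) ->
  (forall a y, N y -> N (a * y * starK a)) ->
  (cone_contr (ext N) k <-> forall s, N (a_ s * act s k)).
Proof.
move=> N0 NA NC; rewrite /cone_contr /cone_ext.
split=> H.
  move=> s; have := H (fun t => (t == s)%:R); rewrite diag_sum.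
  rewrite (bigD1 s) //= big1 ?addr0 => [|r Hr]; last by rewrite (negbTE Hr) mulr0.
  by rewrite eqxx starK1 mul1r mulr1.
move=> x; rewrite diag_sum; apply: big_ind => // s _.
have := NC (starK (x s)) _ (H s); by rewrite starKK.
Qed.

Lemma emb0 : cp_emb gT (0 : K) = 0.
Proof. by apply/ffunP=> t; rewrite !ffunE; case: ifP. Qed.

Lemma embD (a b : K) : cp_emb gT (a + b) = cp_emb gT a + cp_emb gT b.
Proof. by apply/ffunP=> t; rewrite !ffunE; case: ifP; rewrite ?addr0. Qed.

Lemma twist_emb s k :
  mul (mul (starD (cp_e K s)) (cp_emb gT k)) (cp_e K s) = cp_emb gT (a_ s * act s k).
Proof.
have [a Ha] := a_in_K s.
have Ea : a_ s = a by rewrite /cp_a Ha /cp_f ffunE eqxx.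
rewrite mulA e_mono emb_mono.
have -> : mul (mono 1 k) (mono s 1) = mul (mono s 1) (mono 1 (act s k)).
  by rewrite -mono_split mono_mul mul1g (proj1 (Phi_norm _)) mul1r mulr1.
by rewrite -mulA -e_mono Ha Ea emb_mono emb_mul.
Qed.

Lemma main :
  (forall N : K -> Prop,
     herm_cone *%R 1 starK N -> (forall s, N (cp_a act Phi starD s)) ->
     [/\ forall u : {ffun gT -> K}, cone_ext act Phi starK starD N u <->
           (forall d, N (cp_f (cp_mul act Phi (cp_mul act Phi (starD d) u) d))),
         forall k, cone_contr (cone_ext act Phi starK starD N) k <->
           (forall s, cone_twist act Phi starD N s k),
         forall s u, cone_ext act Phi starK starD (cone_twist act Phi starD N s) u <->
           cone_ext act Phi starK starD N u
       & forall u, cone_ext act Phi starK starD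
                     (cone_contr (cone_ext act Phi starK starD N)) u <->
           cone_ext act Phi starK starD N u]) /\
  (forall M : {ffun gT -> K} -> Prop,
     herm_cone (cp_mul act Phi) (cp_one gT K) starD M ->
     (forall (s : gT) (k : K), cone_twist act Phi starD (cone_contr M) s k <-> cone_contr M k) /\
     (forall k, cone_contr (cone_ext act Phi starK starD (cone_contr M)) k <->
        cone_contr M k)).
Proof.
split.
  move=> N [Nh N1 NA NC N0] _.
  have N0' : N 0 by have [] := N0 0; move=> _ /(_ erefl) [].
  have C2 k := char2 k N0' NA NC.
  split.
  - move=> u; exact: char1.
  - move=> k; exact: C2.
  - move=> s u; exact: char3.
  move=> u; split=> H.
    apply/(char3 N 1%g) => x; exact: (proj1 (C2 _) (H x) 1%g).
  move=> x; apply/C2 => s; exact: (proj2 (char3 N s u) H x).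
move=> M [Mh M1 MA MC M0].
have M0' : M 0 by have [] := M0 0; move=> _ /(_ erefl) [].
have T5 : forall s k, cone_twist act Phi starD (cone_contr M) s k <-> cone_contr M k.
  move=> s k; rewrite /cone_twist /cone_contr -twist_emb; split=> H.
    have [y [Hy1 Hy2]] := e_inv s.
    have := MC (starD y) _ H; rewrite starDK.
    have -> : mul (mul (starD y) (mul (mul (starD (cp_e K s)) (cp_emb gT k)) (cp_e K s))) y
        = mul (mul (starD (mul (cp_e K s) y)) (cp_emb gT k)) (mul (cp_e K s) y).
      by rewrite starDM !mulA.
    by rewrite e_mono Hy1 starD1 cmul1l cmul1r.
  by have := MC (starD (cp_e K s)) _ H; rewrite starDK.
split=> // k.
have HC : forall a y, cone_contr M y -> cone_contr M (a * y * starK a).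
  move=> a y Hy; rewrite /cone_contr.
  have := MC (cp_emb gT a) _ Hy.
  by rewrite starK_def !emb_mono !emb_mul.
have HA : forall a b, cone_contr M a -> cone_contr M b -> cone_contr M (a + b).
  move=> a b Ha Hb; rewrite /cone_contr embD; exact: MA.
have H0 : cone_contr M 0 by rewrite /cone_contr emb0.
have C2 := char2 k H0 HA HC.
split=> H; first by apply/(T5 1%g); exact: (proj1 C2 H 1%g).
by apply/C2 => s; apply/T5.
Qed.
End CP.

Unset Implicit Arguments.
Set Strict Implicit.
Theorem theorem4p2 (gT : finGroupType) (K : fieldType)
    (act : gT -> {rmorphism K -> K}) (Phi : gT -> gT -> K)
    (starK : K -> K) (starD : {ffun gT -> K} -> {ffun gT -> K})
    (char0 : [pchar K] =i pred0)
    (act_faithful : forall s t : gT, (forall k, act s k = act t k) -> s = t)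
    (act1 : forall k, act 1%g k = k)
    (actM : forall (s t : gT) k, act (s * t)%g k = act t (act s k))
    (Phi_neq0 : forall s t, Phi s t != 0)
    (Phi_norm : forall s, Phi 1%g s = 1 /\ Phi s 1%g = 1)
    (Phi_cocycle : forall s t r,
        Phi (s * t)%g r * act r (Phi s t) = Phi s (t * r)%g * Phi t r)
    (D_div : forall x : {ffun gT -> K}, x != 0 ->
        exists y, cp_mul act Phi x y = cp_one gT K /\ cp_mul act Phi y x = cp_one gT K)
    (starD_inv : is_involution (cp_mul act Phi) starD)
    (starK_def : forall k, starD (cp_emb gT k) = cp_emb gT (starK k))
    (a_in_K : forall s, exists k,
        cp_mul act Phi (starD (cp_e K s)) (cp_e K s) = cp_emb gT k)
    (N_nonempty : exists N : K -> Prop,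
        herm_cone *%R 1 starK N /\ (forall s, N (cp_a act Phi starD s))) :
  (forall N : K -> Prop,
     herm_cone *%R 1 starK N -> (forall s, N (cp_a act Phi starD s)) ->
     [/\ forall u : {ffun gT -> K}, cone_ext act Phi starK starD N u <->
           (forall d, N (cp_f (cp_mul act Phi (cp_mul act Phi (starD d) u) d))),
         forall k, cone_contr (cone_ext act Phi starK starD N) k <->
           (forall s, cone_twist act Phi starD N s k),
         forall s u, cone_ext act Phi starK starD (cone_twist act Phi starD N s) u <->
           cone_ext act Phi starK starD N u
       & forall u, cone_ext act Phi starK starD
                     (cone_contr (cone_ext act Phi starK starD N)) u <->
           cone_ext act Phi starK starD N u]) /\
  (forall M : {ffun gT -> K} -> Prop,
     herm_cone (cp_mul act Phi) (cp_one gT K) starD M ->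
     (forall (s : gT) (k : K), cone_twist act Phi starD (cone_contr M) s k <-> cone_contr M k) /\
     (forall k, cone_contr (cone_ext act Phi starK starD (cone_contr M)) k <->
        cone_contr M k)).
Proof. eapply main; eassumption. Qed.
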